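(* Let $\sigma>0$ and let $f,g,h$ be smooth, nowhere-vanishing real functions of $(y,s)$ on an open set $U\subset\mathbb{R}^2$ satisfying the bilinear equations $$\Big(\tfrac12 D_yD_s-1\Big)g\cdot g=-fh,\qquad \Big(\tfrac{1}{\sqrt{\sigma}}D_s+1\Big)f\cdot h=g^2,\qquad \Big(D_yD_s+\tfrac{2}{\sqrt{\sigma}}D_s+\sqrt{\sigma}D_y\Big)f\cdot h=0 .$$ Define the hodograph map $(y,s)\mapsto(x,t)$ by $$x=y-(\ln g)_s,\qquad t=s,$$ and the functions $$u=-(\ln g)_{ss},\qquad \rho=\frac{g^2}{fh}.$$ Then $\partial x/\partial y=fh/g^2=\rho^{-1}\neq 0$ and $\partial x/\partial s=u$; in particular the map is locally invertible, and on any subset where it is a diffeomorphism onto its image, $u$ and $\rho$, regarded as functions of $(x,t)$, satisfy the two-component Hunter–Saxton system with $\kappa=2$: $$\rho_t+(\rho u)_x=0,\qquad m_t+u\,m_x+2m\,u_x-\sigma\rho\rho_x=0,\quad m=2-u_{xx},$$ i.e. $u_{txx}-4u_x+2u_xu_{xx}+uu_{xxx}=-\sigma\rho\rho_x$ together with $\rho_t+(\rho u)_x=0$. *)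

(* Defs.v *)
From Stdlib Require Import Reals.
Open Scope R_scope.

Definition open2 (U : R -> R -> Prop) : Prop :=
  forall y s, U y s -> exists eps, 0 < eps /\
    forall y' s', Rabs (y' - y) < eps -> Rabs (s' - s) < eps -> U y' s'.

Definition cont2 (F : R -> R -> R) (y s : R) : Prop :=
  forall eps, 0 < eps -> exists delta, 0 < delta /\
    forall y' s', Rabs (y' - y) < delta -> Rabs (s' - s) < delta ->
      Rabs (F y' s' - F y s) < eps.

(* [smooth_fam U F D]: F is C^infinity on the open set U, and
   D i j is its partial derivative  d^i/d(1st var)^i d^j/d(2nd var)^j.
   (All iterated partials exist and are jointly continuous on U; by Schwarz
   the order of differentiation is then irrelevant.) *)
Definition smooth_fam (U : R -> R -> Prop) (F : R -> R -> R)
  (D : nat -> nat -> R -> R -> R) : Prop :=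
  (forall y s, U y s -> D 0%nat 0%nat y s = F y s) /\
  forall (i j : nat) y s, U y s ->
    derivable_pt_lim (fun a => D i j a s) y (D (S i) j y s) /\
    derivable_pt_lim (fun b => D i j y b) s (D i (S j) y s) /\
    cont2 (D i j) y s.

(* Hirota bilinear derivatives of a.b at (y,s), written out, where Da, Db are
   the partial-derivative families of a and b (index 1 = y, index 2 = s). *)
Definition hirota_y (Da Db : nat -> nat -> R -> R -> R) (y s : R) : R :=
  Da 1%nat 0%nat y s * Db 0%nat 0%nat y s - Da 0%nat 0%nat y s * Db 1%nat 0%nat y s.
Definition hirota_s (Da Db : nat -> nat -> R -> R -> R) (y s : R) : R :=
  Da 0%nat 1%nat y s * Db 0%nat 0%nat y s - Da 0%nat 0%nat y s * Db 0%nat 1%nat y s.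
Definition hirota_ys (Da Db : nat -> nat -> R -> R -> R) (y s : R) : R :=
  Da 1%nat 1%nat y s * Db 0%nat 0%nat y s - Da 1%nat 0%nat y s * Db 0%nat 1%nat y s
  - Da 0%nat 1%nat y s * Db 1%nat 0%nat y s + Da 0%nat 0%nat y s * Db 1%nat 1%nat y s.

(* hodograph x = y - (ln g)_s,  u = -(ln g)_ss,  rho = g^2/(f h) *)
Definition xmap (g : R -> R -> R) (Dg : nat -> nat -> R -> R -> R) (y s : R) : R :=
  y - Dg 0%nat 1%nat y s / g y s.
Definition uval (g : R -> R -> R) (Dg : nat -> nat -> R -> R -> R) (y s : R) : R :=
  - ((g y s * Dg 0%nat 2%nat y s - Dg 0%nat 1%nat y s ^ 2) / (g y s ^ 2)).
Definition rhoval (f g h : R -> R -> R) (y s : R) : R :=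
  g y s ^ 2 / (f y s * h y s).

(* Main.v *)
Require Import Defs.
From Stdlib Require Import Reals Lra.
From Coquelicot Require Import Coquelicot.
Open Scope R_scope.

Require Import Defs.
From Stdlib Require Import Reals Lra.
From Coquelicot Require Import Coquelicot.
Open Scope R_scope.

Lemma locally_of (x : R) (P : R -> Prop) :
  (exists eps, 0 < eps /\ forall z, Rabs (z - x) < eps -> P z) -> locally x P.
Proof. intros [e [He H]]. exists (mkposreal e He). intros z Hz. apply H. exact Hz. Qed.

Lemma dpl_eq f x l l' : derivable_pt_lim f x l -> l = l' -> derivable_pt_lim f x l'.
Proof. intros H ->; exact H. Qed.

Lemma deriv_unique_loc f g x l1 l2 :
  derivable_pt_lim f x l1 -> derivable_pt_lim g x l2 ->
  (exists eps, 0 < eps /\ forall z, Rabs (z - x) < eps -> f z = g z) -> l1 = l2.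
Proof.
  intros H1 H2 Hl. apply (uniqueness_limite g x); [|exact H2].
  apply is_derive_Reals. apply (is_derive_ext_loc f g). apply locally_of. exact Hl.
  apply is_derive_Reals; exact H1.
Qed.

Lemma dpl_ext_loc f g x l :
  derivable_pt_lim f x l ->
  (exists eps, 0 < eps /\ forall z, Rabs (z - x) < eps -> f z = g z) -> derivable_pt_lim g x l.
Proof.
  intros H1 Hl. apply is_derive_Reals. apply (is_derive_ext_loc f g). apply locally_of. exact Hl.
  apply is_derive_Reals; exact H1.
Qed.

Lemma dpl_inv f x l : derivable_pt_lim f x l -> f x <> 0 ->
  derivable_pt_lim (fun a => / f a) x (- (l * (/ f x * / f x))).
Proof.
  intros H Hn. apply is_derive_Reals in H. apply is_derive_Reals.
  eapply is_derive_ext. intro; reflexivity.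
  eapply filterdiff_ext_lin. apply (is_derive_inv f x l H Hn).
  intro y. simpl. unfold scal; simpl. unfold mult; simpl. field. exact Hn.
Qed.

Lemma cont2_iff F y s : cont2 F y s <-> continuity_2d_pt F y s.
Proof.
  split.
  - intros H eps. destruct (H eps (cond_pos eps)) as [d [Hd Hd']].
    exists (mkposreal d Hd). exact Hd'.
  - intros H eps He. destruct (H (mkposreal eps He)) as [d Hd].
    exists d. split. apply cond_pos. exact Hd.
Qed.

Lemma mvt_bound (F Fy : R -> R -> R) x y v u e d :
  0 < d -> 0 <= e ->
  (forall c, Rabs (c - x) < d -> derivable_pt_lim (fun a => F a v) c (Fy c v)) ->
  (forall c, Rabs (c - x) < d -> Rabs (Fy c v - Fy x y) < e) ->
  Rabs (u - x) < d ->
  Rabs (F u v - F x v - Fy x y * (u - x)) <= e * Rabs (u - x).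
Proof.
  intros Hd He HD HC Hu.
  destruct (Rtotal_order u x) as [Hlt|[Heq|Hgt]].
  - destruct (MVT_cor2 (fun a => F a v) (fun c => Fy c v) u x Hlt) as [c [Hc1 Hc2]].
    { intros c Hc. apply HD. apply Rabs_def1; apply Rabs_def2 in Hu; lra. }
    assert (Hcx : Rabs (c - x) < d) by (apply Rabs_def1; apply Rabs_def2 in Hu; lra).
    specialize (HC c Hcx).
    replace (F u v - F x v - Fy x y * (u - x)) with ((Fy c v - Fy x y) * (u - x)) by lra.
    rewrite Rabs_mult. apply Rmult_le_compat_r. apply Rabs_pos. lra.
  - subst. replace (F x v - F x v - Fy x y * (x - x)) with 0 by ring.
    rewrite Rabs_R0. replace (x - x) with 0 by ring. rewrite Rabs_R0. lra.
  - destruct (MVT_cor2 (fun a => F a v) (fun c => Fy c v) x u Hgt) as [c [Hc1 Hc2]].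
    { intros c Hc. apply HD. apply Rabs_def1; apply Rabs_def2 in Hu; lra. }
    assert (Hcx : Rabs (c - x) < d) by (apply Rabs_def1; apply Rabs_def2 in Hu; lra).
    specialize (HC c Hcx).
    replace (F u v - F x v - Fy x y * (u - x)) with ((Fy c v - Fy x y) * (u - x)) by lra.
    rewrite Rabs_mult. apply Rmult_le_compat_r. apply Rabs_pos. lra.
Qed.

Lemma diff2 (F Fy : R -> R -> R) x y ly :
  (exists d, 0 < d /\ forall u v, Rabs (u - x) < d -> Rabs (v - y) < d ->
       derivable_pt_lim (fun a => F a v) u (Fy u v)) ->
  continuity_2d_pt Fy x y ->
  derivable_pt_lim (fun b => F x b) y ly ->
  differentiable_pt_lim F x y (Fy x y) ly.
Proof.
  intros [d0 [Hd0 HF]] HC HD eps.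
  assert (He2 : 0 < eps / 2) by (destruct eps; simpl; lra).
  destruct (HC (mkposreal (eps/2) He2)) as [d1 Hd1]. simpl in Hd1.
  destruct (HD (eps/2) He2) as [d2 Hd2].
  assert (Hd : 0 < Rmin d0 (Rmin d1 d2)).
  { apply Rmin_pos. lra. apply Rmin_pos; apply cond_pos. }
  exists (mkposreal _ Hd). simpl. intros u v Hu Hv.
  assert (Hm1 : Rmin d0 (Rmin d1 d2) <= d0) by apply Rmin_l.
  assert (Hm2 : Rmin d0 (Rmin d1 d2) <= d1) by (eapply Rle_trans; [apply Rmin_r| apply Rmin_l]).
  assert (Hm3 : Rmin d0 (Rmin d1 d2) <= d2) by (eapply Rle_trans; [apply Rmin_r| apply Rmin_r]).
  assert (B1 : Rabs (F u v - F x v - Fy x y * (u - x)) <= eps/2 * Rabs (u - x)).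
  { apply (mvt_bound F Fy x y v u (eps/2) (Rmin d0 (Rmin d1 d2))); try lra.
    - intros c Hc. apply HF; lra.
    - intros c Hc. apply Hd1; lra. }
  assert (B2 : Rabs (F x v - F x y - ly * (v - y)) <= eps/2 * Rabs (v - y)).
  { destruct (Req_dec v y) as [E|E].
    - subst. replace (F x y - F x y - ly * (y - y)) with 0 by ring.
      rewrite Rabs_R0. replace (y - y) with 0 by ring. rewrite Rabs_R0. lra.
    - assert (Hh : v - y <> 0) by lra.
      specialize (Hd2 (v - y) Hh ltac:(lra)).
      replace (y + (v - y)) with v in Hd2 by ring.
      replace (F x v - F x y - ly * (v - y)) with (((F x v - F x y) / (v - y) - ly) * (v - y)) by (field; exact Hh).
      rewrite Rabs_mult. apply Rmult_le_compat_r. apply Rabs_pos. lra. }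
  replace (F u v - F x y - (Fy x y * (u - x) + ly * (v - y))) with
    ((F u v - F x v - Fy x y * (u - x)) + (F x v - F x y - ly * (v - y))) by ring.
  eapply Rle_trans. apply Rabs_triang.
  assert (R1 := Rmax_l (Rabs (u - x)) (Rabs (v - y))).
  assert (R2 := Rmax_r (Rabs (u - x)) (Rabs (v - y))).
  destruct eps as [e ep]; simpl in *. nra.
Qed.

Definition fam (U : R -> R -> Prop) (D : nat -> nat -> R -> R -> R) : Prop :=
  forall i j y s, U y s ->
    derivable_pt_lim (fun a => D i j a s) y (D (S i) j y s) /\
    derivable_pt_lim (fun b => D i j y b) s (D i (S j) y s) /\
    cont2 (D i j) y s.

Inductive ex : Type :=
| C (r : R) | Vy | Gf (i j : nat) | Gg (i j : nat) | Gh (i j : nat)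
| If | Ig | Ih | Add (a b : ex) | Mul (a b : ex) | Neg (a : ex).

Fixpoint ev (Df Dg Dh : nat -> nat -> R -> R -> R) (e : ex) (y s : R) : R :=
  match e with
  | C r => r | Vy => y
  | Gf i j => Df i j y s | Gg i j => Dg i j y s | Gh i j => Dh i j y s
  | If => / Df 0%nat 0%nat y s | Ig => / Dg 0%nat 0%nat y s | Ih => / Dh 0%nat 0%nat y s
  | Add a b => ev Df Dg Dh a y s + ev Df Dg Dh b y s
  | Mul a b => ev Df Dg Dh a y s * ev Df Dg Dh b y s
  | Neg a => - ev Df Dg Dh a y s
  end.

Fixpoint dy (e : ex) : ex :=
  match e with
  | C _ => C 0 | Vy => C 1
  | Gf i j => Gf (S i) j | Gg i j => Gg (S i) j | Gh i j => Gh (S i) j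
  | If => Neg (Mul (Gf 1 0) (Mul If If))
  | Ig => Neg (Mul (Gg 1 0) (Mul Ig Ig))
  | Ih => Neg (Mul (Gh 1 0) (Mul Ih Ih))
  | Add a b => Add (dy a) (dy b)
  | Mul a b => Add (Mul (dy a) b) (Mul a (dy b))
  | Neg a => Neg (dy a)
  end.

Fixpoint ds (e : ex) : ex :=
  match e with
  | C _ => C 0 | Vy => C 0
  | Gf i j => Gf i (S j) | Gg i j => Gg i (S j) | Gh i j => Gh i (S j)
  | If => Neg (Mul (Gf 0 1) (Mul If If))
  | Ig => Neg (Mul (Gg 0 1) (Mul Ig Ig))
  | Ih => Neg (Mul (Gh 0 1) (Mul Ih Ih))
  | Add a b => Add (ds a) (ds b)
  | Mul a b => Add (Mul (ds a) b) (Mul a (ds b))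
  | Neg a => Neg (ds a)
  end.

Lemma dyds_comm Df Dg Dh e y s :
  ev Df Dg Dh (dy (ds e)) y s = ev Df Dg Dh (ds (dy e)) y s.
Proof.
  induction e; simpl; try rewrite IHe; try rewrite IHe1, IHe2; try ring.
Qed.

Lemma fam_dy U D i j y s : fam U D -> U y s -> derivable_pt_lim (fun a => D i j a s) y (D (S i) j y s).
Proof. intros H Hu. apply (H i j y s Hu). Qed.
Lemma fam_ds U D i j y s : fam U D -> U y s -> derivable_pt_lim (fun b => D i j y b) s (D i (S j) y s).
Proof. intros H Hu. apply (H i j y s Hu). Qed.
Lemma fam_c U D i j y s : fam U D -> U y s -> continuity_2d_pt (D i j) y s.
Proof. intros H Hu. apply cont2_iff, (H i j y s Hu). Qed.

Lemma deriv_ok U Df Dg Dh :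
  fam U Df -> fam U Dg -> fam U Dh ->
  (forall y s, U y s -> Df 0%nat 0%nat y s <> 0) ->
  (forall y s, U y s -> Dg 0%nat 0%nat y s <> 0) ->
  (forall y s, U y s -> Dh 0%nat 0%nat y s <> 0) ->
  forall e y s, U y s ->
    derivable_pt_lim (fun a => ev Df Dg Dh e a s) y (ev Df Dg Dh (dy e) y s) /\
    derivable_pt_lim (fun b => ev Df Dg Dh e y b) s (ev Df Dg Dh (ds e) y s) /\
    continuity_2d_pt (ev Df Dg Dh e) y s.
Proof.
  intros HF HG HH NF NG NH e y s Hu.
  induction e; simpl.
  - split; [|split]. apply derivable_pt_lim_const. apply derivable_pt_lim_const.
    apply continuity_2d_pt_const.
  - split; [|split]. apply derivable_pt_lim_id. apply derivable_pt_lim_const.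
    apply continuity_2d_pt_id1.
  - split; [|split]. apply (fam_dy U); auto. apply (fam_ds U); auto. apply (fam_c U); auto.
  - split; [|split]. apply (fam_dy U); auto. apply (fam_ds U); auto. apply (fam_c U); auto.
  - split; [|split]. apply (fam_dy U); auto. apply (fam_ds U); auto. apply (fam_c U); auto.
  - split; [|split].
    + apply (dpl_inv (fun a => Df 0%nat 0%nat a s)); auto. apply (fam_dy U); auto.
    + apply (dpl_inv (fun b => Df 0%nat 0%nat y b)); auto. apply (fam_ds U); auto.
    + apply (continuity_2d_pt_inv (Df 0%nat 0%nat)); auto. apply (fam_c U); auto.
  - split; [|split].
    + apply (dpl_inv (fun a => Dg 0%nat 0%nat a s)); auto. apply (fam_dy U); auto.
    + apply (dpl_inv (fun b => Dg 0%nat 0%nat y b)); auto. apply (fam_ds U); auto.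
    + apply (continuity_2d_pt_inv (Dg 0%nat 0%nat)); auto. apply (fam_c U); auto.
  - split; [|split].
    + apply (dpl_inv (fun a => Dh 0%nat 0%nat a s)); auto. apply (fam_dy U); auto.
    + apply (dpl_inv (fun b => Dh 0%nat 0%nat y b)); auto. apply (fam_ds U); auto.
    + apply (continuity_2d_pt_inv (Dh 0%nat 0%nat)); auto. apply (fam_c U); auto.
  - destruct IHe1 as [A1 [B1 C1]]; destruct IHe2 as [A2 [B2 C2]].
    split; [|split].
    + exact (derivable_pt_lim_plus _ _ _ _ _ A1 A2).
    + exact (derivable_pt_lim_plus _ _ _ _ _ B1 B2).
    + exact (continuity_2d_pt_plus _ _ _ _ C1 C2).
  - destruct IHe1 as [A1 [B1 C1]]; destruct IHe2 as [A2 [B2 C2]].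
    split; [|split].
    + exact (derivable_pt_lim_mult _ _ _ _ _ A1 A2).
    + exact (derivable_pt_lim_mult _ _ _ _ _ B1 B2).
    + exact (continuity_2d_pt_mult _ _ _ _ C1 C2).
  - destruct IHe as [A1 [B1 C1]].
    split; [|split].
    + exact (derivable_pt_lim_opp _ _ _ A1).
    + exact (derivable_pt_lim_opp _ _ _ B1).
    + exact (continuity_2d_pt_opp _ _ _ C1).
Qed.

Definition GoodU U Df Dg Dh : Prop :=
  open2 U /\ fam U Df /\ fam U Dg /\ fam U Dh /\
  (forall y s, U y s -> Df 0%nat 0%nat y s <> 0 /\ Dg 0%nat 0%nat y s <> 0 /\ Dh 0%nat 0%nat y s <> 0).

Lemma dok U Df Dg Dh : GoodU U Df Dg Dh -> forall e y s, U y s ->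
    derivable_pt_lim (fun a => ev Df Dg Dh e a s) y (ev Df Dg Dh (dy e) y s) /\
    derivable_pt_lim (fun b => ev Df Dg Dh e y b) s (ev Df Dg Dh (ds e) y s) /\
    continuity_2d_pt (ev Df Dg Dh e) y s.
Proof.
  intros [_ [HF [HG [HH HN]]]]. apply deriv_ok; auto.
  all: intros y s Hu; apply (HN y s Hu).
Qed.

Lemma ev_diff U Df Dg Dh : GoodU U Df Dg Dh -> forall e y s, U y s ->
  differentiable_pt_lim (ev Df Dg Dh e) y s (ev Df Dg Dh (dy e) y s) (ev Df Dg Dh (ds e) y s).
Proof.
  intros HG e y s Hu.
  assert (HO := proj1 HG). destruct (HO y s Hu) as [d [Hd Hb]].
  apply (diff2 (ev Df Dg Dh e) (ev Df Dg Dh (dy e))).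
  - exists d. split; auto. intros u v H1 H2. apply (dok U Df Dg Dh HG e u v (Hb u v H1 H2)).
  - apply (dok U Df Dg Dh HG (dy e) y s Hu).
  - apply (dok U Df Dg Dh HG e y s Hu).
Qed.

Lemma ext_d U Df Dg Dh : GoodU U Df Dg Dh -> forall e1 e2,
  (forall y s, U y s -> ev Df Dg Dh e1 y s = ev Df Dg Dh e2 y s) ->
  forall y s, U y s -> ev Df Dg Dh (dy e1) y s = ev Df Dg Dh (dy e2) y s /\
                      ev Df Dg Dh (ds e1) y s = ev Df Dg Dh (ds e2) y s.
Proof.
  intros HG e1 e2 He y s Hu.
  assert (HO := proj1 HG). destruct (HO y s Hu) as [d [Hd Hb]].
  destruct (dok U Df Dg Dh HG e1 y s Hu) as [A1 [B1 _]].
  destruct (dok U Df Dg Dh HG e2 y s Hu) as [A2 [B2 _]].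
  split.
  - apply (deriv_unique_loc _ _ y _ _ A1 A2). exists d. split; auto.
    intros z Hz. apply He. apply Hb; auto. replace (s - s) with 0 by ring. rewrite Rabs_R0; auto.
  - apply (deriv_unique_loc _ _ s _ _ B1 B2). exists d. split; auto.
    intros z Hz. apply He. apply Hb; auto. replace (y - y) with 0 by ring. rewrite Rabs_R0; auto.
Qed.

Lemma diff_partials F x t lx lt : differentiable_pt_lim F x t lx lt ->
  derivable_pt_lim (fun a => F a t) x lx /\ derivable_pt_lim (fun b => F x b) t lt.
Proof.
  intros H. split.
  - apply (dpl_eq _ _ (lx * 1 + lt * 0)); [|ring].
    apply (derivable_pt_lim_comp_2d F (fun a => a) (fun _ => t)); auto.
    apply derivable_pt_lim_id. apply derivable_pt_lim_const.
  - apply (dpl_eq _ _ (lx * 0 + lt * 1)); [|ring].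
    apply (derivable_pt_lim_comp_2d F (fun _ => x) (fun b => b)); auto.
    apply derivable_pt_lim_const. apply derivable_pt_lim_id.
Qed.

Lemma fam_diff W DY : open2 W -> fam W DY -> forall i j x t, W x t ->
  differentiable_pt_lim (DY i j) x t (DY (S i) j x t) (DY i (S j) x t).
Proof.
  intros HO HF i j x t Hw. destruct (HO x t Hw) as [d [Hd Hb]].
  apply diff2.
  - exists d. split; auto. intros u v H1 H2. apply (HF i j u v (Hb u v H1 H2)).
  - apply (fam_c W DY (S i) j x t HF Hw).
  - apply (HF i j x t Hw).
Qed.

Lemma snd_diff x t : differentiable_pt_lim (fun _ v => v) x t 0 1.
Proof.
  apply (diff2 (fun _ v => v) (fun _ _ => 0)).
  - exists 1. split. lra. intros. apply derivable_pt_lim_const.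
  - apply continuity_2d_pt_const.
  - apply derivable_pt_lim_id.
Qed.
Definition GoodW (U W : R -> R -> Prop) DY : Prop :=
  open2 W /\ fam W DY /\ (forall x t, W x t -> U (DY 0%nat 0%nat x t) t).

Lemma comp_diff U Df Dg Dh W DY : GoodU U Df Dg Dh -> GoodW U W DY ->
  forall e x t, W x t ->
  differentiable_pt_lim (fun a b => ev Df Dg Dh e (DY 0%nat 0%nat a b) b) x t
    (ev Df Dg Dh (dy e) (DY 0%nat 0%nat x t) t * DY 1%nat 0%nat x t + ev Df Dg Dh (ds e) (DY 0%nat 0%nat x t) t * 0)
    (ev Df Dg Dh (dy e) (DY 0%nat 0%nat x t) t * DY 0%nat 1%nat x t + ev Df Dg Dh (ds e) (DY 0%nat 0%nat x t) t * 1).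
Proof.
  intros HU [HO [HF HWU]] e x t Hw.
  apply (differentiable_pt_lim_comp (ev Df Dg Dh e) (DY 0%nat 0%nat) (fun _ v => v)).
  - apply (ev_diff U Df Dg Dh HU e _ _ (HWU x t Hw)).
  - apply (fam_diff W DY HO HF 0 0 x t Hw).
  - apply snd_diff.
Qed.

Definition GsE := Mul (Gg 0 1) Ig.
Definition xE := Add Vy (Neg GsE).
Definition uE := Neg (ds GsE).
Definition rhoE := Mul (Gg 0 0) (Mul (Gg 0 0) (Mul If Ih)).
Definition InvRho := Mul (Gf 0 0) (Mul (Gh 0 0) (Mul Ig Ig)).
Definition LxG r e := Mul r (dy e).
Definition LtG r u e := Add (ds e) (Neg (Mul u (Mul r (dy e)))).
Definition Lx := LxG rhoE.
Definition Lt := LtG rhoE uE.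

Lemma Yrel U Df Dg Dh W DY : GoodU U Df Dg Dh -> GoodW U W DY ->
  (forall x t, W x t -> ev Df Dg Dh xE (DY 0%nat 0%nat x t) t = x) ->
  forall x t, W x t ->
   ev Df Dg Dh (dy xE) (DY 0%nat 0%nat x t) t * DY 1%nat 0%nat x t = 1 /\
   ev Df Dg Dh (dy xE) (DY 0%nat 0%nat x t) t * DY 0%nat 1%nat x t
     + ev Df Dg Dh (ds xE) (DY 0%nat 0%nat x t) t = 0.
Proof.
  intros HU HW HX x t Hw.
  destruct (diff_partials _ _ _ _ _ (comp_diff U Df Dg Dh W DY HU HW xE x t Hw)) as [A B].
  destruct HW as [HO _]. destruct (HO x t Hw) as [d [Hd Hb]].
  split.
  - rewrite <- (Rplus_0_r (_ * _)).
    rewrite <- (Rmult_0_r (ev Df Dg Dh (ds xE) (DY 0%nat 0%nat x t) t)).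
    apply (deriv_unique_loc _ (fun a => a) x _ _ A (derivable_pt_lim_id x)).
    exists d. split; auto. intros z Hz. apply HX. apply Hb; auto.
    replace (t - t) with 0 by ring. rewrite Rabs_R0; auto.
  - rewrite <- (Rmult_1_r (ev Df Dg Dh (ds xE) (DY 0%nat 0%nat x t) t)).
    apply (deriv_unique_loc _ (fun _ => x) t _ _ B (derivable_pt_lim_const x t)).
    exists d. split; auto. intros z Hz. apply HX. apply Hb; auto.
    replace (x - x) with 0 by ring. rewrite Rabs_R0; auto.
Qed.


Lemma ev_Lx Df Dg Dh E y s : ev Df Dg Dh (Lx E) y s = ev Df Dg Dh rhoE y s * ev Df Dg Dh (dy E) y s.
Proof. reflexivity. Qed.
Lemma ev_Lt Df Dg Dh E y s : ev Df Dg Dh (Lt E) y s =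
  ev Df Dg Dh (ds E) y s + - (ev Df Dg Dh uE y s * (ev Df Dg Dh rhoE y s * ev Df Dg Dh (dy E) y s)).
Proof. reflexivity. Qed.

Lemma CLgen Df Dg Dh r u E y s :
  ev Df Dg Dh (ds r) y s + ev Df Dg Dh r y s * ev Df Dg Dh r y s * ev Df Dg Dh (dy u) y s = 0 ->
  ev Df Dg Dh (LtG r u (LxG r E)) y s = ev Df Dg Dh (LxG r (LtG r u E)) y s.
Proof.
  intros K. unfold LtG, LxG. simpl. rewrite (dyds_comm Df Dg Dh E).
  replace (ev Df Dg Dh (ds r) y s) with (- (ev Df Dg Dh r y s * ev Df Dg Dh r y s * ev Df Dg Dh (dy u) y s)) by lra.
  ring.
Qed.

Definition Hyp U Df Dg Dh W DY : Prop :=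
  GoodU U Df Dg Dh /\ GoodW U W DY /\
  (forall x t, W x t -> ev Df Dg Dh xE (DY 0%nat 0%nat x t) t = x) /\
  (forall y s, U y s -> ev Df Dg Dh (dy GsE) y s = 1 - ev Df Dg Dh InvRho y s) /\
  (forall y s, U y s -> ev Df Dg Dh InvRho y s * ev Df Dg Dh rhoE y s = 1).

Lemma Kfact U Df Dg Dh W DY : Hyp U Df Dg Dh W DY -> forall y s, U y s ->
  ev Df Dg Dh (ds rhoE) y s + ev Df Dg Dh rhoE y s * ev Df Dg Dh rhoE y s * ev Df Dg Dh (dy uE) y s = 0.
Proof.
  intros [HU [HW [HX [HR1 HIR]]]] y s Hu.
  assert (A : ev Df Dg Dh (dy uE) y s = ev Df Dg Dh (ds InvRho) y s).
  { change (ev Df Dg Dh (dy uE) y s) with (- ev Df Dg Dh (dy (ds GsE)) y s).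
    rewrite dyds_comm.
    rewrite (proj2 (ext_d U Df Dg Dh HU (dy GsE) (Add (C 1) (Neg InvRho)) (fun y s Hu => HR1 y s Hu) y s Hu)).
    simpl. ring. }
  assert (B := proj2 (ext_d U Df Dg Dh HU (Mul InvRho rhoE) (C 1) (fun y s Hu => HIR y s Hu) y s Hu)).
  change (ev Df Dg Dh (ds InvRho) y s * ev Df Dg Dh rhoE y s + ev Df Dg Dh InvRho y s * ev Df Dg Dh (ds rhoE) y s = 0) in B.
  rewrite A.
  assert (Hi := HIR y s Hu).
  set (i := ev Df Dg Dh InvRho y s) in *. set (r := ev Df Dg Dh rhoE y s) in *.
  set (i' := ev Df Dg Dh (ds InvRho) y s) in *. set (r' := ev Df Dg Dh (ds rhoE) y s) in *.
  transitivity (r * (i' * r + i * r') + r' * (1 - i * r)). ring. rewrite B, Hi. ring.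
Qed.

Lemma CL U Df Dg Dh W DY : Hyp U Df Dg Dh W DY -> forall E y s, U y s ->
  ev Df Dg Dh (Lt (Lx E)) y s = ev Df Dg Dh (Lx (Lt E)) y s.
Proof. intros H E y s Hu. apply CLgen. apply (Kfact U Df Dg Dh W DY H y s Hu). Qed.

Lemma Lx_ext U Df Dg Dh : GoodU U Df Dg Dh -> forall E1 E2,
  (forall y s, U y s -> ev Df Dg Dh E1 y s = ev Df Dg Dh E2 y s) ->
  forall y s, U y s -> ev Df Dg Dh (Lx E1) y s = ev Df Dg Dh (Lx E2) y s /\
                      ev Df Dg Dh (Lt E1) y s = ev Df Dg Dh (Lt E2) y s.
Proof.
  intros HU E1 E2 He y s Hu. destruct (ext_d U Df Dg Dh HU E1 E2 He y s Hu) as [A B].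
  rewrite !ev_Lx, !ev_Lt, A, B. split; reflexivity.
Qed.

Lemma iter_comm U Df Dg Dh W DY : Hyp U Df Dg Dh W DY -> forall i E y s, U y s ->
  ev Df Dg Dh (Lt (Nat.iter i Lx E)) y s = ev Df Dg Dh (Nat.iter i Lx (Lt E)) y s.
Proof.
  intros H i. induction i as [|i IH]; intros E y s Hu. reflexivity.
  change (Nat.iter (S i) Lx E) with (Lx (Nat.iter i Lx E)).
  change (Nat.iter (S i) Lx (Lt E)) with (Lx (Nat.iter i Lx (Lt E))).
  rewrite (CL U Df Dg Dh W DY H _ y s Hu).
  apply (proj1 (Lx_ext U Df Dg Dh (proj1 H) _ _ (fun y s Hu => IH E y s Hu) y s Hu)).
Qed.

Lemma Yx U Df Dg Dh W DY : Hyp U Df Dg Dh W DY -> forall x t, W x t ->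
  DY 1%nat 0%nat x t = ev Df Dg Dh rhoE (DY 0%nat 0%nat x t) t /\
  DY 0%nat 1%nat x t = - (ev Df Dg Dh uE (DY 0%nat 0%nat x t) t * ev Df Dg Dh rhoE (DY 0%nat 0%nat x t) t).
Proof.
  intros H x t Hw. assert (H' := H). destruct H' as [HU [HW [HX [HR1 HIR]]]].
  assert (Hu := proj2 (proj2 HW) x t Hw).
  destruct (Yrel U Df Dg Dh W DY HU HW HX x t Hw) as [A B].
  assert (E1 : ev Df Dg Dh (dy xE) (DY 0%nat 0%nat x t) t = ev Df Dg Dh InvRho (DY 0%nat 0%nat x t) t).
  { change (ev Df Dg Dh (dy xE) (DY 0%nat 0%nat x t) t) with (1 - ev Df Dg Dh (dy GsE) (DY 0%nat 0%nat x t) t).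
    rewrite HR1; auto. ring. }
  assert (E2 : ev Df Dg Dh (ds xE) (DY 0%nat 0%nat x t) t = ev Df Dg Dh uE (DY 0%nat 0%nat x t) t).
  { change (ev Df Dg Dh (ds xE) (DY 0%nat 0%nat x t) t) with (0 + - ev Df Dg Dh (ds GsE) (DY 0%nat 0%nat x t) t).
    change (ev Df Dg Dh uE (DY 0%nat 0%nat x t) t) with (- ev Df Dg Dh (ds GsE) (DY 0%nat 0%nat x t) t). ring. }
  rewrite E1 in A, B. rewrite E2 in B. assert (Hi := HIR _ _ Hu).
  set (i := ev Df Dg Dh InvRho (DY 0%nat 0%nat x t) t) in *.
  set (r := ev Df Dg Dh rhoE (DY 0%nat 0%nat x t) t) in *.
  set (u := ev Df Dg Dh uE (DY 0%nat 0%nat x t) t) in *.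
  split.
  - transitivity (DY 1%nat 0%nat x t * (i * r)). rewrite Hi; ring.
    transitivity ((i * DY 1%nat 0%nat x t) * r). ring. rewrite A; ring.
  - transitivity (DY 0%nat 1%nat x t * (i * r)). rewrite Hi; ring.
    transitivity ((i * DY 0%nat 1%nat x t + u) * r - u * r). ring. rewrite B; ring.
Qed.

Lemma comp_L U Df Dg Dh W DY : Hyp U Df Dg Dh W DY -> forall E x t, W x t ->
  derivable_pt_lim (fun a => ev Df Dg Dh E (DY 0%nat 0%nat a t) t) x (ev Df Dg Dh (Lx E) (DY 0%nat 0%nat x t) t) /\
  derivable_pt_lim (fun b => ev Df Dg Dh E (DY 0%nat 0%nat x b) b) t (ev Df Dg Dh (Lt E) (DY 0%nat 0%nat x t) t) /\
  continuity_2d_pt (fun a b => ev Df Dg Dh E (DY 0%nat 0%nat a b) b) x t.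
Proof.
  intros H E x t Hw. assert (H' := H). destruct H' as [HU [HW _]].
  assert (D := comp_diff U Df Dg Dh W DY HU HW E x t Hw).
  destruct (Yx U Df Dg Dh W DY H x t Hw) as [Y1 Y2].
  destruct (diff_partials _ _ _ _ _ D) as [A B].
  split; [|split].
  - eapply dpl_eq. exact A. rewrite ev_Lx, Y1. ring.
  - eapply dpl_eq. exact B. rewrite ev_Lt, Y2. ring.
  - apply differentiable_continuity_pt. eexists; eexists; exact D.
Qed.

Definition DC Df Dg Dh DY e (i j : nat) (x t : R) : R :=
  ev Df Dg Dh (Nat.iter i Lx (Nat.iter j Lt e)) (DY 0%nat 0%nat x t) t.

Lemma DC_fam U Df Dg Dh W DY : Hyp U Df Dg Dh W DY -> forall e, fam W (DC Df Dg Dh DY e).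
Proof.
  intros H e i j x t Hw. unfold DC.
  destruct (comp_L U Df Dg Dh W DY H (Nat.iter i Lx (Nat.iter j Lt e)) x t Hw) as [A [B C']].
  split; [|split].
  - exact A.
  - eapply dpl_eq. exact B.
    apply (iter_comm U Df Dg Dh W DY H). apply (proj2 (proj2 (proj1 (proj2 H)))). exact Hw.
  - apply cont2_iff. exact C'.
Qed.

Lemma HR1_pt Df Dg Dh y s :
  Df 0%nat 0%nat y s <> 0 -> Dg 0%nat 0%nat y s <> 0 -> Dh 0%nat 0%nat y s <> 0 ->
  / 2 * hirota_ys Dg Dg y s - Dg 0%nat 0%nat y s * Dg 0%nat 0%nat y s = - (Df 0%nat 0%nat y s * Dh 0%nat 0%nat y s) ->
  ev Df Dg Dh (dy GsE) y s = 1 - ev Df Dg Dh InvRho y s.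
Proof.
  intros NF NG NH E. unfold hirota_ys in E. simpl.
  assert (E' : Dg 1%nat 1%nat y s = (Dg 1%nat 0%nat y s * Dg 0%nat 1%nat y s + Dg 0%nat 0%nat y s * Dg 0%nat 0%nat y s - Df 0%nat 0%nat y s * Dh 0%nat 0%nat y s) / Dg 0%nat 0%nat y s).
  { apply (Rmult_eq_reg_r (Dg 0%nat 0%nat y s)); [|exact NG].
    field_simplify; [|exact NG]. lra. }
  rewrite E'. field. auto.
Qed.

Lemma HIR_pt Df Dg Dh y s :
  Df 0%nat 0%nat y s <> 0 -> Dg 0%nat 0%nat y s <> 0 -> Dh 0%nat 0%nat y s <> 0 ->
  ev Df Dg Dh InvRho y s * ev Df Dg Dh rhoE y s = 1.
Proof. intros. simpl. field. auto. Qed.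

Definition P0E := Add (Mul (Gf 0 1) If) (Neg (Mul (Gh 0 1) Ih)).
Definition PE := Add (Mul (Gf 1 0) If) (Neg (Mul (Gh 1 0) Ih)).
Definition QsE := Add (Mul (Gf 0 1) If) (Mul (Gh 0 1) Ih).

Lemma HR2_pt Df Dg Dh y s q : 0 < q ->
  Df 0%nat 0%nat y s <> 0 -> Dg 0%nat 0%nat y s <> 0 -> Dh 0%nat 0%nat y s <> 0 ->
  / q * hirota_s Df Dh y s + Df 0%nat 0%nat y s * Dh 0%nat 0%nat y s = Dg 0%nat 0%nat y s ^ 2 ->
  ev Df Dg Dh P0E y s = q * (ev Df Dg Dh rhoE y s - 1).
Proof.
  intros Hq NF NG NH E. unfold hirota_s in E.
  assert (E' : Df 0%nat 1%nat y s = (q * (Dg 0%nat 0%nat y s ^ 2 - Df 0%nat 0%nat y s * Dh 0%nat 0%nat y s) + Df 0%nat 0%nat y s * Dh 0%nat 1%nat y s) / Dh 0%nat 0%nat y s).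
  { apply (Rmult_eq_reg_r (Dh 0%nat 0%nat y s)); [|exact NH].
    field_simplify; [|exact NH]. rewrite <- E. field. lra. }
  simpl. rewrite E'. field. auto.
Qed.

Lemma HR3_pt Df Dg Dh y s q : 0 < q ->
  Df 0%nat 0%nat y s <> 0 -> Dg 0%nat 0%nat y s <> 0 -> Dh 0%nat 0%nat y s <> 0 ->
  / q * hirota_s Df Dh y s + Df 0%nat 0%nat y s * Dh 0%nat 0%nat y s = Dg 0%nat 0%nat y s ^ 2 ->
  hirota_ys Df Dh y s + 2 / q * hirota_s Df Dh y s + q * hirota_y Df Dh y s = 0 ->
  ev Df Dg Dh (dy QsE) y s = - (q * ev Df Dg Dh rhoE y s * ev Df Dg Dh PE y s) - 2 * (ev Df Dg Dh rhoE y s - 1).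
Proof.
  intros Hq NF NG NH E2 E3.
  assert (Hs : hirota_s Df Dh y s = q * (Dg 0%nat 0%nat y s ^ 2 - Df 0%nat 0%nat y s * Dh 0%nat 0%nat y s)).
  { rewrite <- E2. field. lra. }
  rewrite Hs in E3. unfold hirota_s in Hs. unfold hirota_ys, hirota_y in E3.
  assert (E' : Df 0%nat 1%nat y s = (q * (Dg 0%nat 0%nat y s ^ 2 - Df 0%nat 0%nat y s * Dh 0%nat 0%nat y s) + Df 0%nat 0%nat y s * Dh 0%nat 1%nat y s) / Dh 0%nat 0%nat y s).
  { apply (Rmult_eq_reg_r (Dh 0%nat 0%nat y s)); [|exact NH].
    field_simplify; [|exact NH]. lra. }
  assert (F11 : Df 1%nat 1%nat y s = - (- Df 1%nat 0%nat y s * Dh 0%nat 1%nat y s - Df 0%nat 1%nat y s * Dh 1%nat 0%nat y s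
       + Df 0%nat 0%nat y s * Dh 1%nat 1%nat y s + 2 / q * (q * (Dg 0%nat 0%nat y s ^ 2 - Df 0%nat 0%nat y s * Dh 0%nat 0%nat y s))
       + q * (Df 1%nat 0%nat y s * Dh 0%nat 0%nat y s - Df 0%nat 0%nat y s * Dh 1%nat 0%nat y s)) / Dh 0%nat 0%nat y s).
  { apply (Rmult_eq_reg_r (Dh 0%nat 0%nat y s)); [|exact NH].
    field_simplify; [|split; [lra|exact NH]]. field_simplify in E3; [|lra]. lra. }
  simpl. rewrite F11. rewrite E'. field. repeat split; auto; lra.
Qed.

Lemma iterS {A} (f : A -> A) n x : Nat.iter (S n) f x = f (Nat.iter n f x).
Proof. reflexivity. Qed.
Lemma iter0 {A} (f : A -> A) x : Nat.iter 0 f x = x.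
Proof. reflexivity. Qed.

Definition WE2 := Neg (Add (Mul (C 2) GsE) (Neg QsE)).
Definition ME (q : R) := Mul rhoE (Mul rhoE (Add (C 2) (Mul (C q) PE))).
Definition NE (q : R) := Add (C 2) (Neg (ME q)).

Definition Hyp2 U Df Dg Dh W DY q : Prop :=
  Hyp U Df Dg Dh W DY /\ 0 < q /\
  (forall y s, U y s -> ev Df Dg Dh P0E y s = q * (ev Df Dg Dh rhoE y s - 1)) /\
  (forall y s, U y s -> ev Df Dg Dh (dy QsE) y s =
      - (q * ev Df Dg Dh rhoE y s * ev Df Dg Dh PE y s) - 2 * (ev Df Dg Dh rhoE y s - 1)).

Lemma eq1_gen Df Dg Dh r u y s :
  ev Df Dg Dh (LtG r u r) y s + (ev Df Dg Dh (LxG r r) y s * ev Df Dg Dh u y s + ev Df Dg Dh r y s * ev Df Dg Dh (LxG r u) y s)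
  = ev Df Dg Dh (ds r) y s + ev Df Dg Dh r y s * ev Df Dg Dh r y s * ev Df Dg Dh (dy u) y s.
Proof. simpl. ring. Qed.

Lemma eq1_pt U Df Dg Dh W DY : Hyp U Df Dg Dh W DY -> forall x t, W x t ->
  DC Df Dg Dh DY rhoE 0 1 x t + (DC Df Dg Dh DY rhoE 1 0 x t * DC Df Dg Dh DY uE 0 0 x t
     + DC Df Dg Dh DY rhoE 0 0 x t * DC Df Dg Dh DY uE 1 0 x t) = 0.
Proof.
  intros H x t Hw. unfold DC. rewrite ?iterS, ?iter0.
  assert (Hu := proj2 (proj2 (proj1 (proj2 H))) x t Hw).
  unfold Lt, Lx. rewrite eq1_gen. apply (Kfact U Df Dg Dh W DY H _ _ Hu).
Qed.

Lemma conc_w Df Dg Dh y s :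
  Df 0%nat 0%nat y s <> 0 -> Dg 0%nat 0%nat y s <> 0 -> Dh 0%nat 0%nat y s <> 0 ->
  ev Df Dg Dh WE2 y s * ev Df Dg Dh rhoE y s = - ev Df Dg Dh (ds rhoE) y s.
Proof. intros. simpl. field. auto. Qed.

Lemma dyP0E Df Dg Dh y s : ev Df Dg Dh (dy P0E) y s = ev Df Dg Dh (ds PE) y s.
Proof. simpl. ring. Qed.

Lemma Lu U Df Dg Dh W DY : Hyp U Df Dg Dh W DY -> forall y s, U y s ->
  ev Df Dg Dh (Lx uE) y s = ev Df Dg Dh WE2 y s.
Proof.
  intros H y s Hu. assert (K := Kfact U Df Dg Dh W DY H y s Hu).
  destruct H as [HU [_ [_ [_ HIR]]]].
  destruct (proj2 (proj2 (proj2 (proj2 HU))) y s Hu) as [NF [NG NH]].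
  assert (Cw := conc_w Df Dg Dh y s NF NG NH).
  assert (Hi := HIR y s Hu).
  assert (Nr : ev Df Dg Dh rhoE y s <> 0).
  { intro Z. rewrite Z in Hi. lra. }
  apply (Rmult_eq_reg_r (ev Df Dg Dh rhoE y s)); [|exact Nr].
  rewrite Cw, ev_Lx. lra.
Qed.

Lemma LLu U Df Dg Dh W DY q : Hyp2 U Df Dg Dh W DY q -> forall y s, U y s ->
  ev Df Dg Dh (Lx (Lx uE)) y s = ev Df Dg Dh (NE q) y s.
Proof.
  intros [H [Hq [HR2 HR3]]] y s Hu.
  rewrite (proj1 (Lx_ext U Df Dg Dh (proj1 H) _ _ (fun y s Hu => Lu U Df Dg Dh W DY H y s Hu) y s Hu)).
  destruct H as [HU [_ [_ [HR1 HIR]]]].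
  change (ev Df Dg Dh (Lx WE2) y s) with (ev Df Dg Dh rhoE y s *
     - ((0 * ev Df Dg Dh GsE y s + 2 * ev Df Dg Dh (dy GsE) y s) + - ev Df Dg Dh (dy QsE) y s)).
  change (ev Df Dg Dh (NE q) y s) with (2 + - (ev Df Dg Dh rhoE y s * (ev Df Dg Dh rhoE y s * (2 + q * ev Df Dg Dh PE y s)))).
  rewrite HR1, HR3; auto. assert (Hi := HIR y s Hu).
  set (i := ev Df Dg Dh InvRho y s) in *. set (r := ev Df Dg Dh rhoE y s) in *.
  set (pe := ev Df Dg Dh PE y s). lra.
Qed.

Lemma eq2_pt U Df Dg Dh W DY q : Hyp2 U Df Dg Dh W DY q -> forall x t, W x t ->
  (- DC Df Dg Dh DY uE 2 1 x t) + DC Df Dg Dh DY uE 0 0 x t * (- DC Df Dg Dh DY uE 3 0 x t)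
   + 2 * (2 - DC Df Dg Dh DY uE 2 0 x t) * DC Df Dg Dh DY uE 1 0 x t
   - (q * q) * DC Df Dg Dh DY rhoE 0 0 x t * DC Df Dg Dh DY rhoE 1 0 x t = 0.
Proof.
  intros H2 x t Hw. assert (H2' := H2). destruct H2' as [H [Hq [HR2 HR3]]].
  assert (HU := proj1 H).
  assert (Hu := proj2 (proj2 (proj1 (proj2 H))) x t Hw).
  set (y := DY 0%nat 0%nat x t) in *.
  unfold DC. fold y. rewrite ?iterS, ?iter0.
  assert (A := iter_comm U Df Dg Dh W DY H 2 uE y t Hu). rewrite ?iterS, ?iter0 in A. rewrite <- A.
  assert (LL := LLu U Df Dg Dh W DY q H2).
  destruct (Lx_ext U Df Dg Dh HU _ _ LL y t Hu) as [B1 B2].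
  rewrite B1, B2, (LL y t Hu), (Lu U Df Dg Dh W DY H y t Hu).
  assert (Pe : ev Df Dg Dh (ds PE) y t = q * ev Df Dg Dh (dy rhoE) y t).
  { rewrite <- dyP0E.
    rewrite (proj1 (ext_d U Df Dg Dh HU P0E (Mul (C q) (Add rhoE (Neg (C 1)))) (fun y s Hu => HR2 y s Hu) y t Hu)).
    simpl. ring. }
  destruct (proj2 (proj2 (proj2 (proj2 HU))) y t Hu) as [NF [NG NH]].
  assert (Cw := conc_w Df Dg Dh y t NF NG NH).
  change (ev Df Dg Dh (Lt (NE q)) y t) with
    ((0 + - ev Df Dg Dh (ds (ME q)) y t) + - (ev Df Dg Dh uE y t * (ev Df Dg Dh rhoE y t * (0 + - ev Df Dg Dh (dy (ME q)) y t)))).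
  change (ev Df Dg Dh (Lx (NE q)) y t) with (ev Df Dg Dh rhoE y t * (0 + - ev Df Dg Dh (dy (ME q)) y t)).
  change (ev Df Dg Dh (NE q) y t) with (2 + - ev Df Dg Dh (ME q) y t).
  change (ev Df Dg Dh (Lx rhoE) y t) with (ev Df Dg Dh rhoE y t * ev Df Dg Dh (dy rhoE) y t).
  change (ev Df Dg Dh (ds (ME q)) y t) with
    (ev Df Dg Dh (ds rhoE) y t * (ev Df Dg Dh rhoE y t * (2 + q * ev Df Dg Dh PE y t)) +
     ev Df Dg Dh rhoE y t * (ev Df Dg Dh (ds rhoE) y t * (2 + q * ev Df Dg Dh PE y t) +
       ev Df Dg Dh rhoE y t * (0 + (0 * ev Df Dg Dh PE y t + q * ev Df Dg Dh (ds PE) y t)))).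
  change (ev Df Dg Dh (ME q) y t) with (ev Df Dg Dh rhoE y t * (ev Df Dg Dh rhoE y t * (2 + q * ev Df Dg Dh PE y t))).
  rewrite Pe.
  set (r := ev Df Dg Dh rhoE y t) in *. set (w := ev Df Dg Dh WE2 y t) in *.
  set (rs := ev Df Dg Dh (ds rhoE) y t) in *. set (ry := ev Df Dg Dh (dy rhoE) y t) in *.
  set (pe := ev Df Dg Dh PE y t) in *. set (u := ev Df Dg Dh uE y t) in *.
  set (my := ev Df Dg Dh (dy (ME q)) y t) in *.
  replace rs with (- (w * r)) by lra. ring.
Qed.

Theorem theorem1
  (sigma : R) (Hsigma : 0 < sigma)
  (U : R -> R -> Prop) (HU : open2 U)
  (f g h : R -> R -> R) (Df Dg Dh : nat -> nat -> R -> R -> R)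
  (Hf : smooth_fam U f Df) (Hg : smooth_fam U g Dg) (Hh : smooth_fam U h Dh)
  (Hf0 : forall y s, U y s -> f y s <> 0)
  (Hg0 : forall y s, U y s -> g y s <> 0)
  (Hh0 : forall y s, U y s -> h y s <> 0)
  (E1 : forall y s, U y s ->
     / 2 * hirota_ys Dg Dg y s - g y s * g y s = - (f y s * h y s))
  (E2 : forall y s, U y s ->
     / sqrt sigma * hirota_s Df Dh y s + f y s * h y s = g y s ^ 2)
  (E3 : forall y s, U y s ->
     hirota_ys Df Dh y s + 2 / sqrt sigma * hirota_s Df Dh y s
       + sqrt sigma * hirota_y Df Dh y s = 0) :
  (forall y s, U y s ->
     derivable_pt_lim (fun a => xmap g Dg a s) y (f y s * h y s / g y s ^ 2) /\
     f y s * h y s / g y s ^ 2 = / rhoval f g h y s /\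
     f y s * h y s / g y s ^ 2 <> 0 /\
     derivable_pt_lim (fun b => xmap g Dg y b) s (uval g Dg y s))
  /\
  (forall (V W : R -> R -> Prop) (Y : R -> R -> R) (DY : nat -> nat -> R -> R -> R),
     open2 V -> (forall y s, V y s -> U y s) -> open2 W ->
     smooth_fam W Y DY ->
     (forall y s, V y s -> W (xmap g Dg y s) s /\ Y (xmap g Dg y s) s = y) ->
     (forall x t, W x t -> V (Y x t) t /\ xmap g Dg (Y x t) t = x) ->
     exists DU DR : nat -> nat -> R -> R -> R,
       smooth_fam W (fun x t => uval g Dg (Y x t) t) DU /\
       smooth_fam W (fun x t => rhoval f g h (Y x t) t) DR /\
       forall x t, W x t ->
         DR 0%nat 1%nat x t + (DR 1%nat 0%nat x t * DU 0%nat 0%nat x t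
                               + DR 0%nat 0%nat x t * DU 1%nat 0%nat x t) = 0 /\
         (- DU 2%nat 1%nat x t) + DU 0%nat 0%nat x t * (- DU 3%nat 0%nat x t)
           + 2 * (2 - DU 2%nat 0%nat x t) * DU 1%nat 0%nat x t
           - sigma * DR 0%nat 0%nat x t * DR 1%nat 0%nat x t = 0).
Proof.
  assert (Hq : 0 < sqrt sigma) by (apply sqrt_lt_R0; exact Hsigma).
  set (q := sqrt sigma) in *.
  destruct Hf as [Hfd Hff]. destruct Hg as [Hgd Hgf]. destruct Hh as [Hhd Hhf].
  assert (NZ : forall y s, U y s -> Df 0%nat 0%nat y s <> 0 /\ Dg 0%nat 0%nat y s <> 0 /\ Dh 0%nat 0%nat y s <> 0).
  { intros y s Hu. rewrite Hfd, Hgd, Hhd by exact Hu. auto. }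
  assert (GU : GoodU U Df Dg Dh).
  { split; [exact HU|]. split; [exact Hff|]. split; [exact Hgf|]. split; [exact Hhf|]. exact NZ. }
  assert (HR1 : forall y s, U y s -> ev Df Dg Dh (dy GsE) y s = 1 - ev Df Dg Dh InvRho y s).
  { intros y s Hu. destruct (NZ y s Hu) as [a [b c]]. apply HR1_pt; auto.
    rewrite Hfd, Hgd, Hhd by exact Hu. apply E1; exact Hu. }
  assert (HIR : forall y s, U y s -> ev Df Dg Dh InvRho y s * ev Df Dg Dh rhoE y s = 1).
  { intros y s Hu. destruct (NZ y s Hu) as [a [b c]]. apply HIR_pt; auto. }
  assert (HR2 : forall y s, U y s -> ev Df Dg Dh P0E y s = q * (ev Df Dg Dh rhoE y s - 1)).
  { intros y s Hu. destruct (NZ y s Hu) as [a [b c]]. apply HR2_pt; auto.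
    rewrite Hfd, Hgd, Hhd by exact Hu. apply E2; exact Hu. }
  assert (HR3 : forall y s, U y s -> ev Df Dg Dh (dy QsE) y s =
      - (q * ev Df Dg Dh rhoE y s * ev Df Dg Dh PE y s) - 2 * (ev Df Dg Dh rhoE y s - 1)).
  { intros y s Hu. destruct (NZ y s Hu) as [a [b c]]. apply HR3_pt; auto.
    all: try (rewrite Hfd, Hgd, Hhd by exact Hu; apply E2; exact Hu). }
  assert (XE : forall y s, U y s -> ev Df Dg Dh xE y s = xmap g Dg y s).
  { intros y s Hu. unfold xmap. simpl. rewrite Hgd by exact Hu. unfold Rdiv, Rminus. reflexivity. }
  assert (UE : forall y s, U y s -> ev Df Dg Dh uE y s = uval g Dg y s).
  { intros y s Hu. destruct (NZ y s Hu) as [a [b c]]. unfold uval. simpl. rewrite <- Hgd by exact Hu. field. auto. }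
  assert (RE : forall y s, U y s -> ev Df Dg Dh rhoE y s = rhoval f g h y s).
  { intros y s Hu. destruct (NZ y s Hu) as [a [b c]]. unfold rhoval. simpl.
    rewrite <- Hgd, <- Hfd, <- Hhd by exact Hu. field. auto. }
  split.
  - intros y s Hu. destruct (NZ y s Hu) as [a [b c]].
    destruct (HU y s Hu) as [d [Hd Hb]].
    destruct (dok U Df Dg Dh GU xE y s Hu) as [A [B _]].
    split; [|split; [|split]].
    + apply (dpl_ext_loc (fun z => ev Df Dg Dh xE z s)).
      * eapply dpl_eq. exact A.
        change (ev Df Dg Dh (dy xE) y s) with (1 - ev Df Dg Dh (dy GsE) y s).
        rewrite HR1 by exact Hu. simpl. rewrite <- Hgd, <- Hfd, <- Hhd by exact Hu. field. auto.
      * exists d. split; auto. intros z Hz. apply XE. apply Hb; auto.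
        replace (s - s) with 0 by ring. rewrite Rabs_R0; auto.
    + unfold rhoval. rewrite <- Hgd, <- Hfd, <- Hhd by exact Hu. field. auto.
    + rewrite <- Hgd, <- Hfd, <- Hhd by exact Hu. unfold Rdiv.
      apply Rmult_integral_contrapositive_currified.
      apply Rmult_integral_contrapositive_currified; auto.
      apply Rinv_neq_0_compat. apply pow_nonzero. auto.
    + apply (dpl_ext_loc (fun z => ev Df Dg Dh xE y z)).
      * eapply dpl_eq. exact B. rewrite <- UE by exact Hu.
        change (0 + - ev Df Dg Dh (ds GsE) y s = - ev Df Dg Dh (ds GsE) y s). ring.
      * exists d. split; auto. intros z Hz. apply XE. apply Hb; auto.
        replace (y - y) with 0 by ring. rewrite Rabs_R0; auto.
  - intros V W Y DY HV HVU HW HY HVW HWV.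
    destruct HY as [HYd HYf].
    assert (WU : forall x t, W x t -> U (DY 0%nat 0%nat x t) t).
    { intros x t Hw. rewrite HYd by exact Hw. apply HVU. apply (HWV x t Hw). }
    assert (GW : GoodW U W DY) by (split; [exact HW|split; [exact HYf|exact WU]]).
    assert (HX : forall x t, W x t -> ev Df Dg Dh xE (DY 0%nat 0%nat x t) t = x).
    { intros x t Hw. rewrite XE by auto. rewrite HYd by exact Hw. apply (HWV x t Hw). }
    assert (H1 : Hyp U Df Dg Dh W DY) by (split; [exact GU|split; [exact GW|split; [exact HX|split; [exact HR1|exact HIR]]]]).
    assert (H2 : Hyp2 U Df Dg Dh W DY q) by (split; [exact H1|split; [exact Hq|split; [exact HR2|exact HR3]]]).
    exists (DC Df Dg Dh DY uE), (DC Df Dg Dh DY rhoE).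
    split; [|split].
    + split.
      * intros x t Hw. unfold DC. rewrite !iter0. rewrite UE by auto. rewrite HYd by exact Hw. reflexivity.
      * apply (DC_fam U Df Dg Dh W DY H1).
    + split.
      * intros x t Hw. unfold DC. rewrite !iter0. rewrite RE by auto. rewrite HYd by exact Hw. reflexivity.
      * apply (DC_fam U Df Dg Dh W DY H1).
    + intros x t Hw. split.
      * apply (eq1_pt U Df Dg Dh W DY H1 x t Hw).
      * replace sigma with (q * q) by (unfold q; apply sqrt_sqrt; lra).
        apply (eq2_pt U Df Dg Dh W DY q H2 x t Hw).
Qed.
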